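(* Work in homotopy type theory with function extensionality. Let $f : A \to B$, $g : B \to A$, $\eta : gf \sim \mathsf{id}_A$, $\varepsilon : fg \sim \mathsf{id}_B$ and $\theta : \eta_g \sim g[\varepsilon]$. Then \[ \sum_{\tau : f[\eta] \sim \varepsilon_{f}} \big(\mathsf{Coh}\, \eta \cdot g\llbracket \tau \rrbracket \sim \theta_f\big) \;\simeq\; \prod_{x : A} \Big( \big( f[\eta_x],\, (\mathsf{Coh}\, \eta)_x^{-1} \cdot \theta_{fx} \big) = \big( \varepsilon_{fx},\, \mathsf{refl}_{g[\varepsilon_{fx}]} \big) \Big), \] where both pairs are regarded as elements of the fiber $\mathsf{fib}_{g[-]}\big(g[\varepsilon_{fx}]\big) :\equiv \sum_{p : f(g(fx)) = fx} \big(g[p] = g[\varepsilon_{fx}]\big)$ of the map $g[-] : (f(g(fx)) = fx) \to (g(f(g(fx))) = g(fx))$.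
   Context: Notation: for $h : X \to Y$ and a path $p$, $h[p]$ denotes $\mathsf{ap}_h(p)$; for 2-paths $\alpha : p = q$, $h\llbracket \alpha \rrbracket : h[p] = h[q]$ is the action of $h$ on 2-paths. A homotopy $H : F \sim G$ is an element of $\prod_x Fx = Gx$. For a homotopy $H$: $H_k := \lambda c.\, H_{kc}$, $h[H] := \lambda x.\, h[H_x]$, and for $\alpha : H \sim H'$ (i.e. $\prod_x H_x = H'_x$), $h\llbracket \alpha\rrbracket := \lambda x.\, h\llbracket \alpha_x\rrbracket$; $\cdot$ is pointwise concatenation in diagrammatic order. The homotopy $\mathsf{Coh}\, \eta : \eta_{gf} \sim g[f[\eta]]$ is defined pointwise: $(\mathsf{Coh}\,\eta)_x : \eta_{g(fx)} = g[f[\eta_x]]$ is the concatenation of the path $\eta_{g(fx)} = (gf)[\eta_x]$ given by naturality of $\eta$ (applied to $\eta_x$, cancelling $\eta_x$) with the functoriality path $(gf)[\eta_x] = g[f[\eta_x]]$. *)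

(* Defs.v *)
Set Implicit Arguments.

Inductive paths {A : Type} (a : A) : A -> Type := idpath : paths a a.
Arguments idpath {A a}, [A] a.
Notation "x == y" := (paths x y) (at level 70, no associativity) : type_scope.

Definition concat {A : Type} {x y z : A} (p : x == y) (q : y == z) : x == z :=
  match q in (_ == z') return x == z' with idpath => p end.
Notation "p @ q" := (concat p q) (at level 20, left associativity).

Definition inv {A : Type} {x y : A} (p : x == y) : y == x :=
  match p in (_ == y') return y' == x with idpath => idpath end.
Notation "p ^-1" := (inv p) (at level 3, format "p '^-1'").

(* h[p] = ap h p ; h[[alpha]] = ap (ap h) alpha *)
Definition ap {A B : Type} (h : A -> B) {x y : A} (p : x == y) : h x == h y :=
  match p in (_ == y') return h x == h y' with idpath => idpath end.

Definition ap2 {A B : Type} (h : A -> B) {x y : A} {p q : x == y}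
  (alpha : p == q) : ap h p == ap h q := ap (ap h) alpha.

Definition Htpy {A : Type} {P : A -> Type} (F G : forall x, P x) : Type :=
  forall x, F x == G x.

Definition IsEquiv {X Y : Type} (e : X -> Y) : Type :=
  ({ s : Y -> X & forall y, e (s y) == y } *
   { r : Y -> X & forall x, r (e x) == x })%type.

Definition Equiv (X Y : Type) : Type := { e : X -> Y & IsEquiv e }.

Definition happly {A : Type} {P : A -> Type} {F G : forall x, P x}
  (p : F == G) : Htpy F G :=
  fun x => match p in (_ == G') return F x == G' x with idpath => idpath end.

Definition Funext : Type :=
  forall (A : Type) (P : A -> Type) (F G : forall x, P x), IsEquiv (@happly A P F G).

Definition concat_1p {A : Type} {x y : A} (p : x == y) : idpath @ p == p :=
  match p as p' in (_ == y') return idpath @ p' == p' with idpath => idpath end.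

Definition nat_id {A : Type} {F : A -> A} (H : forall x, F x == x)
  {x y : A} (p : x == y) : H x @ p == ap F p @ H y :=
  match p as p' in (_ == y') return H x @ p' == ap F p' @ H y' with
  | idpath => (concat_1p (H x))^-1 end.

Definition cancelR {A : Type} {x y z : A} (a b : x == y) (r : y == z)
  : a @ r == b @ r -> a == b :=
  match r as r' in (_ == z') return a @ r' == b @ r' -> a == b with
  | idpath => fun e => e end.

Definition ap_compose {A B C : Type} (f : A -> B) (g : B -> C) {x y : A}
  (p : x == y) : ap (fun a => g (f a)) p == ap g (ap f p) :=
  match p as p' in (_ == y') return ap (fun a => g (f a)) p' == ap g (ap f p')
  with idpath => idpath end.

Definition Coh {A B : Type} (f : A -> B) (g : B -> A)
  (eta : forall a, g (f a) == a) (x : A) : eta (g (f x)) == ap g (ap f (eta x)) :=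
  cancelR (eta (g (f x))) (ap (fun a => g (f a)) (eta x)) (eta x)
          (nat_id eta (eta x))
  @ ap_compose f g (eta x).

(* Main.v *)
Require Import Defs.

Record QE (X Y : Type) := mkQE {
  qf : X -> Y; qg : Y -> X;
  qfg : forall y, qf (qg y) == y;
  qgf : forall x, qg (qf x) == x }.
Arguments mkQE {X Y}. Arguments qf {X Y}. Arguments qg {X Y}. Arguments qfg {X Y}. Arguments qgf {X Y}.

Definition QE_Equiv {X Y} (e : QE X Y) : Equiv X Y :=
  existT _ (qf e) (existT _ (qg e) (qfg e), existT _ (qg e) (qgf e)).

Definition QE_comp {X Y Z} (e1 : QE X Y) (e2 : QE Y Z) : QE X Z.
Proof.
  refine (mkQE (fun x => qf e2 (qf e1 x)) (fun z => qg e1 (qg e2 z)) _ _).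
  - intro z. exact (ap (qf e2) (qfg e1 (qg e2 z)) @ qfg e2 z).
  - intro x. exact (ap (qg e1) (qgf e2 (qf e1 x)) @ qgf e1 x).
Defined.

Definition QE_sig {A : Type} {P Q : A -> Type} (e : forall a, QE (P a) (Q a))
  : QE {a : A & P a} {a : A & Q a}.
Proof.
  refine (mkQE (fun u => existT _ (projT1 u) (qf (e _) (projT2 u)))
               (fun u => existT _ (projT1 u) (qg (e _) (projT2 u))) _ _).
  - intros [a q]. exact (ap (existT Q a) (qfg (e a) q)).
  - intros [a q]. exact (ap (existT P a) (qgf (e a) q)).
Defined.

Definition fx (funext : Funext) {A : Type} {P : A -> Type} {F G : forall x, P x}
  (h : Htpy F G) : F == G := projT1 (fst (funext A P F G)) h.

Definition QE_pi (funext : Funext) {A : Type} {P Q : A -> Type}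
  (e : forall a, QE (P a) (Q a)) : QE (forall a, P a) (forall a, Q a).
Proof.
  refine (mkQE (fun k a => qf (e a) (k a)) (fun k a => qg (e a) (k a)) _ _).
  - intro k. apply (fx funext). intro a. exact (qfg (e a) (k a)).
  - intro k. apply (fx funext). intro a. exact (qgf (e a) (k a)).
Defined.

Definition QE_swap (funext : Funext) {A : Type} {P : A -> Type}
  {R : forall a, P a -> Type}
  : QE {t : forall a, P a & forall a, R a (t a)} (forall a, {r : P a & R a r}).
Proof.
  refine (mkQE (fun (u : {t : forall a, P a & forall a, R a (t a)}) a =>
                  existT (R a) (projT1 u a) (projT2 u a))
               (fun k => existT (fun t => forall a, R a (t a))
                          (fun a => projT1 (k a)) (fun a => projT2 (k a))) _ _).
  - intro k. apply (fx funext). intro a. simpl. destruct (k a). exact idpath.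
  - intros [t r]. exact idpath.
Defined.

Definition Vp {X} {x y : X} (p : x == y) : p^-1 @ p == idpath :=
  match p with idpath => idpath end.
Definition pV {X} {x y : X} (p : x == y) : p @ p^-1 == idpath :=
  match p with idpath => idpath end.
Definition V_pp {X} {x y z : X} (p : x == y) (q : y == z) : p^-1 @ (p @ q) == q :=
  match q with idpath => Vp p end.
Definition p_Vp {X} {x y z : X} (p : x == y) (q : x == z) : p @ (p^-1 @ q) == q :=
  match q with idpath => pV p end.
Definition pp_V {X} {x y z : X} (p : x == y) (q : y == z) : (p @ q) @ q^-1 == p :=
  match q with idpath => idpath end.

Definition stepA {X} {a b c : X} (C : a == b) (s : b == c) (T : a == c)
  : QE (C @ s == T) (C^-1 @ T == s).
Proof.
  refine (mkQE (fun d => match d in (_ == T') return C^-1 @ T' == s with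
                         | idpath => V_pp C s end)
               (fun e => match e in (_ == s') return C @ s' == T with
                         | idpath => p_Vp C T end) _ _).
  - intro e. destruct e. destruct T. destruct C. exact idpath.
  - intro d. destruct d. destruct s. destruct C. exact idpath.
Defined.

Definition fwdB {Y Z} (h : Y -> Z) (c : Z) (P : Y) (q : h P == c) (Q : Y) (q' : h Q == c)
  (r : P == Q) : q == ap h r @ q' ->
    existT (fun p => h p == c) P q == existT (fun p => h p == c) Q q' :=
  match r as r in (_ == Q')
     return forall q'' : h Q' == c, q == ap h r @ q'' ->
            existT (fun p => h p == c) P q == existT _ Q' q''
  with idpath => fun q'' e => ap (existT (fun p => h p == c) P) (e @ concat_1p q'') end q'.

Definition auxB {Y Z} (h : Y -> Z) (c : Z) (P : Y) (q q' : h P == c) (E : q == q') :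
  match ap (existT (fun p => h p == c) P) E in (_ == v')
    return {r : P == projT1 v' & q == ap h r @ projT2 v'} with
  | idpath => existT (fun r : P == P => q == ap h r @ q) idpath (concat_1p q)^-1
  end == existT (fun r : P == P => q == ap h r @ q') idpath (E @ (concat_1p q')^-1).
Proof.
  destruct E. simpl.
  exact (ap (fun e' => existT (fun r : P == P => q == ap h r @ q) idpath e')
              (concat_1p (concat_1p q)^-1)^-1).
Defined.

Definition stepB {Y Z} (h : Y -> Z) (c : Z) (u v : {p : Y & h p == c})
  : QE {r : projT1 u == projT1 v & projT2 u == ap h r @ projT2 v} (u == v).
Proof.
  destruct u as [P q].
  refine (mkQE (match v as v return {r : P == projT1 v & q == ap h r @ projT2 v} ->
                       existT _ P q == v with
                | existT _ Q q' => fun re => fwdB h c P q Q q' (projT1 re) (projT2 re) end)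
               (fun w => match w in (_ == v')
                   return {r : P == projT1 v' & q == ap h r @ projT2 v'} with
                   | idpath => existT _ idpath (concat_1p q)^-1 end) _ _).
  - intro w. destruct w.
    simpl. exact (ap (ap (existT (fun p => h p == c) P)) (Vp (concat_1p q))).
  - destruct v as [Q q']. intros [r e]. change (P == Q) in r. revert q' e. destruct r. intros q' e. unfold fwdB. simpl.
    refine (_ @ ap (fun e' => existT (fun r : P == P => q == ap h r @ q') idpath e')
                   (pp_V e (concat_1p q'))).
    exact (auxB h c P q q' (e @ concat_1p q')).
Defined.

Definition perx {Y Z} (h : Y -> Z) (P Q : Y) (a : Z) (C : a == h P) (T : a == h Q)
  : QE {r : P == Q & C @ ap h r == T}
       (existT (fun p => h p == h Q) P (C^-1 @ T) == existT _ Q idpath).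
Proof.
  refine (QE_comp (QE_sig (fun r => stepA C (ap h r) T)) _).
  exact (stepB h (h Q) (existT (fun p => h p == h Q) P (C^-1 @ T)) (existT _ Q idpath)).
Defined.

Theorem lemma3p4 (funext : Funext) (A B : Type) (f : A -> B) (g : B -> A)
  (eta : forall a : A, g (f a) == a) (eps : forall b : B, f (g b) == b)
  (theta : forall b : B, eta (g b) == ap g (eps b)) :
  Equiv
    { tau : forall x : A, ap f (eta x) == eps (f x)
    & forall x : A, Coh f g eta x @ ap2 g (tau x) == theta (f x) }
    (forall x : A,
       @existT (f (g (f x)) == f x)
               (fun p => ap g p == ap g (eps (f x)))
               (ap f (eta x)) ((Coh f g eta x)^-1 @ theta (f x))
       ==
       @existT (f (g (f x)) == f x)
               (fun p => ap g p == ap g (eps (f x)))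
               (eps (f x)) idpath).
Proof.
  apply QE_Equiv.
  refine (QE_comp (QE_swap funext
     (R := fun x r => Coh f g eta x @ ap (ap g) r == theta (f x))) _).
  apply (QE_pi funext). intro x.
  exact (perx (ap g) (ap f (eta x)) (eps (f x)) (eta (g (f x)))
              (Coh f g eta x) (theta (f x))).
Qed.
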